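(* Let $W\in\mathbb{R}^{m\times n}$ have a directed spanning set of $\mathbb{R}^n$ with respect to every $x\in\mathbb{R}^n$, let $x_0,x_1\in\mathbb{R}^n$, and for $a,b\in\mathbb{R}^n$ let $\ell^{a,b}(t)=(1-t)a+tb$, $t\in[0,1]$. Suppose there is $t'\in(0,1)$ such that for all $t\in[0,1]$, $W|_{S(\ell^{x_0,x_1}(t),W)}=W|_{S(x_0,W)}$ if $t<t'$ and $W|_{S(\ell^{x_0,x_1}(t),W)}=W|_{S(x_1,W)}$ if $t>t'$. Suppose further that there is $\delta>0$ such that for every $\delta x\in\mathbb{R}^n$ with $\|\delta x\|_2<\delta$ there is $\delta t$ with $W|_{S(\ell^{x_0,x_1+\delta x}(t),W)}=W|_{S(x_0,W)}$ if $t<t'+\delta t$ and $W|_{S(\ell^{x_0,x_1+\delta x}(t),W)}=W|_{S(x_1,W)}$ if $t>t'+\delta t$. Then $$\|\operatorname{ReLU}(Wx_0)-\operatorname{ReLU}(Wx_1)\|_2\ge\frac{1}{\sqrt2}\min\big(\sigma(W|_{S(x_0,W)}),\sigma(W|_{S(x_1,W)})\big)\|x_0-x_1\|_2.$$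
   Context: For $W$ with rows $w_1,\dots,w_m$ and $x\in\mathbb{R}^n$, $S(x,W)=\{j:\langle w_j,x\rangle\ge 0\}$; for an index set $\mathcal{I}$, $W|_{\mathcal{I}}$ is the $m\times n$ matrix whose $j$-th row is $w_j$ if $j\in\mathcal{I}$ and zero otherwise. $\sigma(M)$ is the smallest singular value of $M$. $W$ has a directed spanning set of $\mathbb{R}^n$ w.r.t. $x$ if $\{w_j: j\in S(x,W)\}$ spans $\mathbb{R}^n$. $\operatorname{ReLU}(y)=\max(y,0)$ componentwise. *)

(* Defs.v *)
From HB Require Import structures.
From mathcomp Require Import all_boot all_order all_algebra.
From mathcomp Require Import boolp classical_sets reals.
Set Implicit Arguments. Unset Strict Implicit. Unset Printing Implicit Defensive.
Import Order.TTheory GRing.Theory Num.Theory.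
Local Open Scope ring_scope.

(* Vectors of R^n are column vectors 'cV[R]_n; W : 'M[R]_(m,n) has rows w_j,
   so <w_j, x> = (W *m x) j 0. *)

Definition Sact (R : realType) (m n : nat) (x : 'cV[R]_n) (W : 'M[R]_(m, n))
  : {set 'I_m} := [set j | 0 <= (W *m x) j 0].

Definition restr (R : realType) (m n : nat) (W : 'M[R]_(m, n)) (I : {set 'I_m})
  : 'M[R]_(m, n) := \matrix_(i, j) (if i \in I then W i j else 0).

(* {w_j : j in S(x,W)} spans R^n, i.e. the row space of the matrix whose rows
   are these w_j (other rows zero) is all of R^n. *)
Definition directed_spanning (R : realType) (m n : nat) (W : 'M[R]_(m, n))
  (x : 'cV[R]_n) : Prop := row_full (restr W (Sact x W)).

Definition norm2 (R : realType) (k : nat) (v : 'cV[R]_k) : R :=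
  Num.sqrt (\sum_(i < k) v i 0 ^+ 2).

Definition relu (R : realType) (k : nat) (v : 'cV[R]_k) : 'cV[R]_k :=
  map_mx (fun y => Num.max y 0) v.

Definition seg (R : realType) (n : nat) (a b : 'cV[R]_n) (t : R) : 'cV[R]_n :=
  (1 - t) *: a + t *: b.

(* smallest singular value of M : 'M_(m,n) (used with m >= n):
   square root of the smallest eigenvalue of M^T M. *)
Definition sigma_min (R : realType) (m n : nat) (M : 'M[R]_(m, n)) : R :=
  Num.sqrt (inf [set a : R | eigenvalue (M^T *m M) a]).

(* Main.v *)
Require Import Defs.
From HB Require Import structures.
From mathcomp Require Import all_boot all_order all_algebra.
From mathcomp Require Import boolp classical_sets reals.
From mathcomp Require Import ring lra.
Import Order.TTheory GRing.Theory Num.Theory.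
Local Open Scope ring_scope.

Section H.
Variable R : realType.

Lemma quad_disc (a b c : R) : 0 <= c ->
  (forall s : R, 0 <= a + 2 * s * b + s ^+ 2 * c) -> b ^+ 2 <= a * c.
Proof.
move=> c0 H; have a0 : 0 <= a by have := H 0; rewrite !(mul0r, mulr0, expr0n) /=; lra.
have [cp|] := ltrP 0 c.
  have := H (- b / c); rewrite -(ler_pM2r cp) mul0r => h.
  have e : (a + 2 * (- b / c) * b + (- b / c) ^+ 2 * c) * c = a * c - b ^+ 2.
    by field; rewrite gt_eqF.
  by move: h; rewrite e subr_ge0.
move=> cle; have ce : c = 0 by apply/eqP; rewrite eq_le cle.
rewrite ce; move: H; rewrite ce => H.
have [->|bn0] := eqVneq b 0; first by rewrite expr0n mulr0.
have e : a + 2 * (- (a + 1) / (2 * b)) * b + (- (a + 1) / (2 * b)) ^+ 2 * 0 = -1.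
  by field; rewrite bn0.
move: (H (- (a + 1) / (2 * b))); rewrite e; lra.
Qed.

Lemma sum_CS (k : nat) (a b : 'I_k -> R) :
  (\sum_i a i * b i) ^+ 2 <= (\sum_i a i ^+ 2) * (\sum_i b i ^+ 2).
Proof.
apply: quad_disc; first by apply: sumr_ge0 => i _; rewrite sqr_ge0.
move=> s.
have -> : \sum_i a i ^+ 2 + 2 * s * \sum_i a i * b i + s ^+ 2 * \sum_i b i ^+ 2
  = \sum_i (a i + s * b i) ^+ 2.
  rewrite mulr_sumr [s ^+ 2 * _]mulr_sumr -!big_split /=.
  by apply: eq_bigr => i _; ring.
by apply: sumr_ge0 => i _; rewrite sqr_ge0.
Qed.


Definition sq (k : nat) (v : 'cV[R]_k) := \sum_i v i 0 ^+ 2.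
Definition dot (k : nat) (u v : 'cV[R]_k) := \sum_i u i 0 * v i 0.
Arguments sq {k}. Arguments dot {k}.

Lemma sq_ge0 k (v : 'cV[R]_k) : 0 <= sq v.
Proof. by apply: sumr_ge0 => i _; rewrite sqr_ge0. Qed.

Lemma sq_eq0 k (v : 'cV[R]_k) : sq v = 0 -> v = 0.
Proof.
move=> /eqP; rewrite psumr_eq0; last by move=> i _; rewrite sqr_ge0.
move=> /allP H; apply/matrixP => i j; rewrite ord1 mxE.
by apply/eqP; rewrite -sqrf_eq0; apply: (H i); rewrite mem_index_enum.
Qed.

Lemma dotE k (u v : 'cV[R]_k) : dot u v = (u^T *m v) 0 0.
Proof. by rewrite mxE; apply: eq_bigr => i _; rewrite mxE. Qed.

Lemma sqE k (v : 'cV[R]_k) : sq v = dot v v.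
Proof. by apply: eq_bigr => i _; rewrite expr2. Qed.

Lemma dotC k (u v : 'cV[R]_k) : dot u v = dot v u.
Proof. by apply: eq_bigr => i _; rewrite mulrC. Qed.

Lemma dotDl k (u w v : 'cV[R]_k) : dot (u + w) v = dot u v + dot w v.
Proof. by rewrite /dot -big_split; apply: eq_bigr => i _; rewrite mxE mulrDl. Qed.

Lemma dotZl k a (u v : 'cV[R]_k) : dot (a *: u) v = a * dot u v.
Proof. by rewrite /dot mulr_sumr; apply: eq_bigr => i _; rewrite mxE mulrA. Qed.

Lemma dotDr k (u w v : 'cV[R]_k) : dot v (u + w) = dot v u + dot v w.
Proof. by rewrite dotC dotDl !(dotC _ v). Qed.

Lemma dotZr k a (u v : 'cV[R]_k) : dot v (a *: u) = a * dot v u.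
Proof. by rewrite dotC dotZl dotC. Qed.

Lemma dot_CS k (u v : 'cV[R]_k) : dot u v ^+ 2 <= sq u * sq v.
Proof. exact: (sum_CS _ (fun i => u i 0) (fun i => v i 0)). Qed.

Definition Kmx m n (P : 'M[R]_(m, n)) := \sum_i \sum_j P i j ^+ 2.
Arguments Kmx {m n}.

Lemma Kmx_ge0 m n (P : 'M[R]_(m, n)) : 0 <= Kmx P.
Proof. by apply: sumr_ge0 => i _; apply: sumr_ge0 => j _; rewrite sqr_ge0. Qed.

Lemma sq_mul_bound m n (P : 'M[R]_(m, n)) z : sq (P *m z) <= Kmx P * sq z.
Proof.
rewrite /Kmx mulr_suml; apply: ler_sum => i _; rewrite mxE.
have := (sum_CS _ (fun j => P i j) (fun j => z j 0)); rewrite /sq.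
by [].

Qed.

Lemma dot_sym_mx k (N : 'M[R]_k) u v : N^T = N -> dot v (N *m u) = dot u (N *m v).
Proof.
move=> NT; rewrite !dotE.
have -> : (v^T *m (N *m u)) = (v^T *m (N *m u))^T^T by rewrite trmxK.
rewrite [in LHS]mxE !trmx_mul trmxK NT mulmxA //.
Qed.

Lemma form_CS k (N : 'M[R]_k) u v : N^T = N -> (forall y, 0 <= dot y (N *m y)) ->
  dot u (N *m v) ^+ 2 <= dot u (N *m u) * dot v (N *m v).
Proof.
move=> NT psd; apply: quad_disc => // s.
have := psd (u + s *: v).
rewrite mulmxDr -scalemxAr !(dotDl, dotDr, dotZl, dotZr) (dot_sym_mx _ _ u v NT).
have e : dot u (N *m u) + s * dot u (N *m v) + s * (dot u (N *m v) + s * dot v (N *m v))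
  = dot u (N *m u) + 2 * s * dot u (N *m v) + s ^+ 2 * dot v (N *m v) by ring.
by rewrite -e.
Qed.


Lemma dotNr k (u v : 'cV[R]_k) : dot v (- u) = - dot v u.
Proof. by rewrite -scaleN1r dotZr mulN1r. Qed.

Lemma arith (a b e s kp kn : R) : 0 <= a -> 0 <= b -> 0 <= e -> 0 < s ->
  0 <= kp -> 0 <= kn -> s <= kp * a -> a ^+ 2 <= b * e -> b ^+ 2 <= a * (kn * a) ->
  e < (2 * (kp ^+ 2 * kn + 1))^-1 * s -> False.
Proof.
move=> a0 b0 e0 s0 KP0 KN0 h1 h2 h3 ed.
  set KK := kp ^+ 2 * kn.
  have KK0' : 0 <= KK by rewrite mulr_ge0 ?sqr_ge0.
  have ed' : 2 * (KK + 1) * e < s.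
    have hp : 0 < 2 * (KK + 1) by lra.
    by move: ed; rewrite -(ltr_pM2l hp) mulrA mulfV ?mul1r // gt_eqF.
  have a2 : a ^+ 2 <= kn * e ^+ 2.
    have apos : 0 < a.
      rewrite lt_def a0 andbT; apply/eqP => aa; move: h1; rewrite aa mulr0 => hh; lra.
    have h4 : (a ^+ 2) ^+ 2 <= (b * e) ^+ 2.
      by rewrite lerXn2r // ?nnegrE ?sqr_ge0 ?mulr_ge0.
    have h5 : (b * e) ^+ 2 <= a * (kn * a) * e ^+ 2.
      by rewrite exprMn ler_wpM2r // sqr_ge0.
    have h6 := le_trans h4 h5.
    have : a ^+ 2 * a ^+ 2 <= a ^+ 2 * (kn * e ^+ 2).
      have ee : a ^+ 2 * a ^+ 2 = (a ^+ 2) ^+ 2 by rewrite expr2.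
      have ee2 : a * (kn * a) * e ^+ 2 = a ^+ 2 * (kn * e ^+ 2) by rewrite !expr2; ring.
      by rewrite ee -ee2.
    by rewrite ler_pM2l // exprn_gt0.
  have s2 : s ^+ 2 <= KK * e ^+ 2.
    have : s ^+ 2 <= (kp * a) ^+ 2 by rewrite lerXn2r // ?nnegrE ?mulr_ge0 //; lra.
    move/le_trans; apply; rewrite exprMn /KK -mulrA ler_wpM2l ?sqr_ge0 //.
  have : (2 * (KK + 1) * e) ^+ 2 < s ^+ 2.
    by rewrite ltrXn2r // ?nnegrE ?mulr_ge0 //; lra.
  have : KK * e ^+ 2 <= (2 * (KK + 1) * e) ^+ 2.
    rewrite exprMn; apply: ler_wpM2r; first exact: sqr_ge0.
    rewrite exprMn; nra.
  lra.
Qed.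

Lemma key m n (A : 'M[R]_(m, n)) (y : 'cV[R]_n) :
  sigma_min A ^+ 2 * sq y <= sq (A *m y).
Proof.
set M := A^T *m A.
have QE : forall z, sq (A *m z) = dot z (M *m z).
  by move=> z; rewrite sqE !dotE trmx_mul !mulmxA.
have MT : M^T = M by rewrite /M trmx_mul trmxK.
have [sy0|syn0] := eqVneq (sq y) 0; first by rewrite sy0 mulr0 sq_ge0.
pose S : set R := fun r => exists z : 'cV[R]_n, sq z != 0 /\ r = sq (A *m z) / sq z.
have S0 : (S !=set0)%classic by exists (sq (A *m y) / sq y); exists y.
have sqpos : forall z : 'cV[R]_n, sq z != 0 -> 0 < sq z.
  by move=> z nz; rewrite lt_def nz sq_ge0.
have Slb : has_lbound S.
  exists 0 => r [z [nz ->]]; apply: divr_ge0; [exact: sq_ge0 | exact: sq_ge0].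
set c := inf S.
have Qc : forall z, c * sq z <= sq (A *m z).
  move=> z; have [->|nz] := eqVneq (sq z) 0; first by rewrite mulr0 sq_ge0.
  rewrite -ler_pdivlMr; last exact: sqpos.
  by apply: (ge_inf Slb); exists z.
have eig : eigenvalue M c.
  apply: contraT => ne.
  set N := M - c%:M.
  have NU : N \in unitmx.
    by rewrite -row_free_unit -kermx_eq0; move: ne; rewrite /eigenvalue /eigenspace negbK.
  have NT : N^T = N by rewrite /N linearB /= tr_scalar_mx MT.
  have Ndot : forall z, dot z (N *m z) = sq (A *m z) - c * sq z.
    move=> z; rewrite /N mulmxBl mul_scalar_mx dotDr dotNr dotZr QE sqE //.
  have psd : forall z, 0 <= dot z (N *m z) by move=> z; rewrite Ndot subr_ge0.
  set P := invmx N.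
  pose K := Kmx P ^+ 2 * Kmx N.
  have K0 : 0 <= K by rewrite mulr_ge0 ?sqr_ge0 ?Kmx_ge0.
  pose d := (2 * (K + 1))^-1.
  have d0 : 0 < d by rewrite invr_gt0; lra.
  have cd : c < c + d by lra.
  have [r [z [zn ->]] rlt] := inf_lt S0 cd.
  have s0 := sqpos _ zn.
  have ed : dot z (N *m z) < d * sq z.
    by rewrite Ndot; move: rlt; rewrite ltr_pdivrMr //; lra.
  set w := N *m z.
  have zw : z = P *m w by rewrite /P /w mulKmx.
  have h1 : sq z <= Kmx P * sq w by rewrite [X in sq X]zw; exact: sq_mul_bound.
  have h2 : sq w ^+ 2 <= dot w (N *m w) * dot z (N *m z).
    by rewrite sqE {2}/w; apply: form_CS.
  have h3 : dot w (N *m w) ^+ 2 <= sq w * (Kmx N * sq w).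
    apply: le_trans (dot_CS _ _ _) _; apply: ler_wpM2l; first exact: sq_ge0.
    exact: sq_mul_bound.
  have a0 := sq_ge0 _ w. have b0 := psd w. have e0 := psd z.
  have KP0 := Kmx_ge0 _ _ P. have KN0 := Kmx_ge0 _ _ N.
  move: ed; rewrite /d /K => ed.
  by case: (arith _ _ _ _ _ _ a0 b0 e0 s0 KP0 KN0 h1 h2 h3 ed).
pose E : set R := fun l => eigenvalue M l.
have lbE : lbound E c.
  move=> l /eigenvalueP [v vM vn0].
  have yM : M *m v^T = l *: v^T by rewrite -{1}MT -trmx_mul vM linearZ.
  have nz : sq v^T != 0.
    apply/eqP => /sq_eq0 h; move/eqP: vn0; apply; by rewrite -(trmxK v) h trmx0.
  apply: (ge_inf Slb); exists v^T; split => //.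
  by rewrite QE yM dotZr -sqE mulfK.
have infc : inf E <= c.
  by apply: (ge_inf (_ : has_lbound E)); [exists c | ].
rewrite /sigma_min -/M -/E.
have [En|Ep] := ltrP (inf E) 0.
  by rewrite ltr0_sqrtr // expr0n mul0r sq_ge0.
rewrite sqr_sqrtr //; apply: le_trans (Qc y); apply: ler_wpM2r => //; exact: sq_ge0.
Qed.

Lemma restr_mulE m n (W : 'M[R]_(m, n)) I (x : 'cV[R]_n) i :
  (restr W I *m x) i 0 = if i \in I then (W *m x) i 0 else 0.
Proof.
have [iI|iI] := boolP (i \in I); rewrite !mxE.
  by apply: eq_bigr => j _; rewrite /restr mxE iI.
by apply: big1 => j _; rewrite /restr mxE (negbTE iI) mul0r.
Qed.

Lemma reluE m n (W : 'M[R]_(m, n)) (x : 'cV[R]_n) :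
  relu (W *m x) = restr W (Sact x W) *m x.
Proof.
apply/matrixP => i j; rewrite ord1 restr_mulE /relu mxE inE.
have [h|h] := leP 0 ((W *m x) i 0).
  by [].
by [].
Qed.

Lemma restr_eq_mem m n (W : 'M[R]_(m, n)) I J i k :
  W i k != 0 -> restr W I = restr W J -> (i \in I) = (i \in J).
Proof.
move=> nz /matrixP /(_ i k); rewrite !mxE.
by case: (i \in I); case: (i \in J) => // h; move: nz; rewrite h eqxx.
Qed.

Lemma small_le0 (x k eta : R) : 0 < eta ->
  (forall eps, 0 < eps -> eps <= eta -> x <= eps * k) -> x <= 0.
Proof.
move=> e0 H.
have [kle|kp] := lerP k 0.
  by apply: le_trans (H eta e0 (lexx _)) _; rewrite mulr_ge0_le0 // ltW.
rewrite leNgt; apply/negP => xp.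
pose eps := Num.min eta (x / (2 * k)).
have ep : 0 < eps by rewrite lt_min e0 divr_gt0 // mulr_gt0.
have ee : eps <= eta by rewrite /eps ge_min lexx.
have := H eps ep ee.
have : eps * k <= x / (2 * k) * k.
  by rewrite ler_wpM2r ?(ltW kp) // /eps ge_min lexx orbT.
have -> : x / (2 * k) * k = x / 2 by field; rewrite gt_eqF.
lra.
Qed.

Lemma cross (t a b : R) : 0 < t < 1 ->
  (forall s, 0 <= s <= 1 -> s < t -> 0 <= (1 - s) * a + s * b) ->
  (forall s, 0 <= s <= 1 -> t < s -> (1 - s) * a + s * b <= 0) ->
  (1 - t) * a + t * b = 0.
Proof.
move=> /andP [t0 t1] H1 H2; apply/eqP; rewrite eq_le; apply/andP; split.
  have et : 0 < 1 - t by lra.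
  apply: (small_le0 _ (a - b) _ et).
  move=> e e0 e1; have := H2 (t + e); rewrite (_ : 0 <= t + e <= 1); last first.
    by apply/andP; split; lra.
  move=> /(_ isT) h; have : t < t + e by lra.
  move=> /h; nra.
rewrite -oppr_le0.
apply: (small_le0 _ (a - b) _ t0).
move=> e e0 e1; have := H1 (t - e); rewrite (_ : 0 <= t - e <= 1); last first.
  by apply/andP; split; lra.
move=> /(_ isT) h; have : t - e < t by lra.
move=> /h; nra.
Qed.


Lemma row_real (t a b : R) : 0 < t < 1 ->
  (forall s, 0 <= s <= 1 -> s < t -> (0 <= (1 - s) * a + s * b) = (0 <= a)) ->
  (forall s, 0 <= s <= 1 -> t < s -> (0 <= (1 - s) * a + s * b) = (0 <= b)) ->
  Num.max a 0 - Num.max b 0 =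
  t * (if 0 <= a then a - b else 0) + (1 - t) * (if 0 <= b then a - b else 0).
Proof.
move=> tt H1 H2.
have [ha|ha] := leP 0 a; have [hb|hb] := leP 0 b.
- by ring.
- have h1 : forall s, 0 <= s <= 1 -> s < t -> 0 <= (1 - s) * a + s * b.
    by move=> s s01 st; rewrite H1.
  have h2 : forall s, 0 <= s <= 1 -> t < s -> (1 - s) * a + s * b <= 0.
    by move=> s s01 st; apply: ltW; rewrite ltNge H2 // -ltNge.
  have c := cross _ _ _ tt h1 h2.
  rewrite subr0 mulr0 addr0; nra.
- have h1 : forall s, 0 <= s <= 1 -> s < t -> 0 <= (1 - s) * - a + s * - b.
    move=> s s01 st; have : ~~ (0 <= (1 - s) * a + s * b) by rewrite H1 // -ltNge.
    rewrite -ltNge; nra.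
  have h2 : forall s, 0 <= s <= 1 -> t < s -> (1 - s) * - a + s * - b <= 0.
    move=> s s01 st; have : (0 <= (1 - s) * a + s * b) by rewrite H2.
    nra.
  have c := cross _ _ _ tt h1 h2.
  rewrite sub0r mulr0 add0r; nra.
- by rewrite !mulr0 addr0 subrr.
Qed.

End H.
Arguments sq {R k}. Arguments dot {R k}.
Arguments restr_eq_mem {R m n W I J i k}.

Lemma mxsubE (R : realType) p q (M N : 'M[R]_(p, q)) i j : (M - N) i j = M i j - N i j.
Proof. by rewrite !mxE. Qed.
Lemma mxaddE (R : realType) p q (M N : 'M[R]_(p, q)) i j : (M + N) i j = M i j + N i j.
Proof. by rewrite !mxE. Qed.
Lemma mxscalE (R : realType) p q (c : R) (M : 'M[R]_(p, q)) i j : (c *: M) i j = c * M i j.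
Proof. by rewrite !mxE. Qed.
Lemma reluEi (R : realType) p (v : 'cV[R]_p) i : relu v i 0 = Num.max (v i 0) 0.
Proof. by rewrite mxE. Qed.

Theorem lemma6 (R : realType) (m n : nat) (W : 'M[R]_(m, n)) (x0 x1 : 'cV[R]_n) :
  (forall x : 'cV[R]_n, directed_spanning W x) ->
  (exists t' : R, 0 < t' < 1 /\
     (forall t : R, 0 <= t <= 1 ->
        (t < t' -> restr W (Sact (seg x0 x1 t) W) = restr W (Sact x0 W)) /\
        (t' < t -> restr W (Sact (seg x0 x1 t) W) = restr W (Sact x1 W))) /\
     (exists delta : R, 0 < delta /\
        forall dx : 'cV[R]_n, norm2 dx < delta ->
          exists dt : R, forall t : R, 0 <= t <= 1 ->
            (t < t' + dt ->
               restr W (Sact (seg x0 (x1 + dx) t) W) = restr W (Sact x0 W)) /\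
            (t' + dt < t ->
               restr W (Sact (seg x0 (x1 + dx) t) W) = restr W (Sact x1 W)))) ->
  norm2 (relu (W *m x0) - relu (W *m x1)) >=
    (Num.sqrt 2)^-1 * Num.min (sigma_min (restr W (Sact x0 W)))
                              (sigma_min (restr W (Sact x1 W))) * norm2 (x0 - x1).
Proof.
move=> _ [t' [tt [Hs _]]].
set A := restr W (Sact x0 W); set B := restr W (Sact x1 W).
set d := x0 - x1; set u := relu (W *m x0) - relu (W *m x1).
have uE : forall i, u i 0 = t' * (A *m d) i 0 + (1 - t') * (B *m d) i 0.
  move=> i; rewrite !restr_mulE !inE.
  have dE : (W *m d) i 0 = (W *m x0) i 0 - (W *m x1) i 0 by rewrite /d mulmxBr mxsubE.
  rewrite dE /u mxsubE !reluEi.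
  set a := (W *m x0) i 0; set b := (W *m x1) i 0.
  have fE : forall s, (W *m seg x0 x1 s) i 0 = (1 - s) * a + s * b.
    by move=> s; rewrite /seg mulmxDr -!scalemxAr mxaddE !mxscalE.
  case: (boolP [exists k, W i k != 0]) => [/existsP [k nz] | /existsPn allz].
    apply: row_real => // s s01 st.
      by have := (Hs s s01).1 st => /(restr_eq_mem nz); rewrite !inE fE.
    by have := (Hs s s01).2 st => /(restr_eq_mem nz); rewrite !inE fE.
  have z0 : forall x : 'cV[R]_n, (W *m x) i 0 = 0.
    by move=> x; rewrite mxE; apply: big1 => k _; move/negPn/eqP: (allz k) => ->; rewrite mul0r.
  by apply: row_real => // s s01 st; rewrite /a /b !z0 !mulr0 addr0.
have ab : forall i, 0 <= (A *m d) i 0 * (B *m d) i 0.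
  move=> i; rewrite !restr_mulE; case: ifP => _; case: ifP => _;
    by rewrite ?mul0r ?mulr0 // -expr2 sqr_ge0.
have hsq : t' ^+ 2 * sq (A *m d) + (1 - t') ^+ 2 * sq (B *m d) <= sq u.
  rewrite /sq !mulr_sumr -big_split; apply: ler_sum => i _; rewrite uE.
  have tt0 : 0 <= t' * (1 - t') by case/andP: tt => ? ?; apply: mulr_ge0; lra.
  have := mulr_ge0 tt0 (ab i); rewrite /=; set al := (A *m d) i 0; set be := (B *m d) i 0 => h.
  have e : (t' * al + (1 - t') * be) ^+ 2 = t' ^+ 2 * al ^+ 2 + (1 - t') ^+ 2 * be ^+ 2 + 2 * (t' * (1 - t') * (al * be)) by ring.
  by rewrite e lerDl mulr_ge0.
have kA := key _ _ _ A d; have kB := key _ _ _ B d.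
move: kA kB; rewrite -/A -/B => kA kB.
set sA := sigma_min A; set sB := sigma_min B; set mm := Num.min sA sB.
have sA0 : 0 <= sA by apply: sqrtr_ge0.
have sB0 : 0 <= sB by apply: sqrtr_ge0.
have m0 : 0 <= mm by rewrite /mm le_min sA0 sB0.
have mA : mm <= sA by rewrite /mm ge_min lexx.
have mB : mm <= sB by rewrite /mm ge_min lexx orbT.
have sd0 : 0 <= sq d by apply: sq_ge0.
set P := mm ^+ 2 * sq d.
have P0 : 0 <= P by rewrite mulr_ge0 ?sqr_ge0.
have PA : P <= sA ^+ 2 * sq d by rewrite ler_wpM2r //; nra.
have PB : P <= sB ^+ 2 * sq d by rewrite ler_wpM2r //; nra.
have t20 : 0 <= t' ^+ 2 by rewrite sqr_ge0.
have t21 : 0 <= (1 - t') ^+ 2 by rewrite sqr_ge0.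
have hA : t' ^+ 2 * P <= t' ^+ 2 * sq (A *m d).
  by rewrite ler_wpM2l //; apply: le_trans PA kA.
have hB : (1 - t') ^+ 2 * P <= (1 - t') ^+ 2 * sq (B *m d).
  by rewrite ler_wpM2l //; apply: le_trans PB kB.
have hP : P / 2 <= sq u.
  apply: le_trans hsq; apply: le_trans (lerD hA hB).
  have e : t' ^+ 2 * P + (1 - t') ^+ 2 * P - P / 2 = (2 * t' - 1) ^+ 2 * P / 2.
    by field.
  have ge : 0 <= (2 * t' - 1) ^+ 2 * P / 2.
    by apply: divr_ge0 => //; apply: mulr_ge0 => //; exact: sqr_ge0.
  by move: ge; rewrite -e subr_ge0.
have nE : forall k (v : 'cV[R]_k), norm2 v = Num.sqrt (sq v) by [].
rewrite !nE.
set X := (Num.sqrt 2)^-1 * mm * Num.sqrt (sq d).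
have X0 : 0 <= X by rewrite mulr_ge0 ?mulr_ge0 ?invr_ge0 ?sqrtr_ge0.
have X2 : X ^+ 2 = P / 2.
  rewrite /X !exprMn exprVn sqr_sqrtr // sqr_sqrtr //.
  by rewrite /P; field.
rewrite -(ger0_norm X0) -sqrtr_sqr X2; exact: ler_wsqrtr.
Qed.
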